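(* Let $G$ be a group acting specially on a quasi-median graph $X$ with finitely many orbits of vertices. Let $J$ be a hyperplane of $X$ and $C$ a clique of $X$ whose edges belong to $J$. Then $\mathrm{stab}_G(C)\leq \mathrm{stab}_G(J)$, the natural homomorphism $\mathrm{stab}_G(C)\to\mathfrak{S}(J)$ is injective, and its image has finite index in $\mathfrak{S}(J)$.
   Context: A connected simplicial graph $X$ is quasi-median if it contains neither $K_4^-$ (the complete graph on four vertices minus an edge) nor $K_{3,2}$ as an induced subgraph, and satisfies: (triangle condition) for all vertices $a,x,y$ with $x,y$ adjacent and $d(a,x)=d(a,y)$, there is a vertex $z$ adjacent to both $x,y$ with $d(a,z)=d(a,x)-1$; (quadrangle condition) for all vertices $a,x,y,z$ with $z$ adjacent to both $x$ and $y$ and $d(a,x)=d(a,y)=d(a,z)-1$, there is a vertex $w$ adjacent to both $x,y$ with $d(a,w)=d(a,z)-2$. A square is an induced 4-cycle; a clique is a maximal complete subgraph. A hyperplane is an equivalence class of edges for the transitive closure of the relation ''the two edges lie in a common triangle, or are opposite sides of a square''. The sectors of a hyperplane $J$ are the connected components of the graph obtained from $X$ by removing the interiors of all edges of $J$; $\mathscr{S}(J)$ denotes the set of sectors of $J$. The carrier $N(J)$ is the subgraph spanned by the edges of $J$. Two hyperplanes $J_1,J_2$ are transverse if there exist edges $e_1\in J_1$, $e_2 \in J_2$ which are two consecutive sides of a square; two distinct hyperplanes are tangent if they are not transverse and $N(J_1)\cap N(J_2)\neq\emptyset$. For a group $G$ acting by graph automorphisms on $X$, $\mathfrak{S}(J)$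 denotes the image of $\mathrm{stab}_G(J)$ in the permutation group of $\mathscr{S}(J)$. The action is hyperplane-special if it is faithful and: (1) for every hyperplane $J$ and every $g\in G$ with $gJ\neq J$, $J$ and $gJ$ are neither transverse nor tangent; (2) for all transverse hyperplanes $J_1,J_2$ and every $g\in G$, $J_1$ and $gJ_2$ are not tangent. The action is special if it is hyperplane-special and, for every hyperplane $J$, the action $\mathfrak{S}(J)\curvearrowright\mathscr{S}(J)$ is free. *)

(* Defs.v *)
From Stdlib Require Import Relations List.
Set Implicit Arguments.

Record Group := {
  gcar :> Type;
  gmul : gcar -> gcar -> gcar;
  ginv : gcar -> gcar;
  gone : gcar;
  gmulA : forall a b c, gmul a (gmul b c) = gmul (gmul a b) c;
  gmul1g : forall a, gmul gone a = a;
  gmulg1 : forall a, gmul a gone = a;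
  gmulVg : forall a, gmul (ginv a) a = gone;
  gmulgV : forall a, gmul a (ginv a) = gone
}.

Record Graph := {
  vert :> Type;
  adj : vert -> vert -> Prop;
  adj_sym : forall x y, adj x y -> adj y x;
  adj_irrefl : forall x, ~ adj x x
}.

Section GraphDefs.
Variable X : Graph.

Inductive walk : X -> X -> nat -> Prop :=
| walk0 : forall x, walk x x 0
| walkS : forall x y z n, adj X x y -> walk y z n -> walk x z (S n).

Definition dist (x y : X) (n : nat) : Prop :=
  walk x y n /\ forall m, walk x y m -> n <= m.

Definition connected : Prop := forall x y : X, exists n, walk x y n.

Definition has_induced_K4minus : Prop :=
  exists a b c d : X,
    a <> b /\ a <> c /\ a <> d /\ b <> c /\ b <> d /\ c <> d /\
    adj X a b /\ adj X a c /\ adj X a d /\ adj X b c /\ adj X b d /\ ~ adj X c d.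

Definition has_induced_K32 : Prop :=
  exists a1 a2 a3 b1 b2 : X,
    a1 <> a2 /\ a1 <> a3 /\ a2 <> a3 /\ a1 <> b1 /\ a1 <> b2 /\
    a2 <> b1 /\ a2 <> b2 /\ a3 <> b1 /\ a3 <> b2 /\ b1 <> b2 /\
    adj X a1 b1 /\ adj X a1 b2 /\ adj X a2 b1 /\ adj X a2 b2 /\
    adj X a3 b1 /\ adj X a3 b2 /\
    ~ adj X a1 a2 /\ ~ adj X a1 a3 /\ ~ adj X a2 a3 /\ ~ adj X b1 b2.

Definition triangle_condition : Prop :=
  forall a x y n, adj X x y -> dist a x n -> dist a y n ->
    exists z, adj X z x /\ adj X z y /\ dist a z (n - 1).

(* READING: x <> y is required *)
Definition quadrangle_condition : Prop :=
  forall a x y z n, x <> y -> adj X z x -> adj X z y ->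
    dist a x n -> dist a y n -> dist a z (S n) ->
    exists w, adj X w x /\ adj X w y /\ dist a w (n - 1).

Definition quasi_median : Prop :=
  connected /\ ~ has_induced_K4minus /\ ~ has_induced_K32 /\
  triangle_condition /\ quadrangle_condition.

Definition square (x1 x2 x3 x4 : X) : Prop :=
  x1 <> x2 /\ x1 <> x3 /\ x1 <> x4 /\ x2 <> x3 /\ x2 <> x4 /\ x3 <> x4 /\
  adj X x1 x2 /\ adj X x2 x3 /\ adj X x3 x4 /\ adj X x4 x1 /\
  ~ adj X x1 x3 /\ ~ adj X x2 x4.

(* edges are represented by ordered pairs (x,y) with x adjacent to y;
   (x,y) and (y,x) represent the same (unoriented) edge. *)
Definition edge (e : X * X) : Prop := adj X (fst e) (snd e).

Inductive hyp_step : X * X -> X * X -> Prop :=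
| hs_rev : forall x y, adj X x y -> hyp_step (x, y) (y, x)
| hs_tri : forall a b c, adj X a b -> adj X b c -> adj X a c ->
    hyp_step (a, b) (a, c)
| hs_sq : forall x1 x2 x3 x4, square x1 x2 x3 x4 ->
    hyp_step (x1, x2) (x4, x3).

Definition hyp_equiv : X * X -> X * X -> Prop := clos_refl_sym_trans _ hyp_step.

Definition is_hyperplane (J : X * X -> Prop) : Prop :=
  exists x y, adj X x y /\
    forall e, J e <-> (edge e /\ hyp_equiv (x, y) e).

Definition same_hyp (J1 J2 : X * X -> Prop) : Prop := forall e, J1 e <-> J2 e.

Definition transverse (J1 J2 : X * X -> Prop) : Prop :=
  exists x1 x2 x3 x4, square x1 x2 x3 x4 /\ J1 (x1, x2) /\ J2 (x2, x3).

Definition in_carrier (J : X * X -> Prop) (v : X) : Prop :=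
  exists w, J (v, w) \/ J (w, v).

Definition tangent (J1 J2 : X * X -> Prop) : Prop :=
  ~ same_hyp J1 J2 /\ ~ transverse J1 J2 /\
  exists v, in_carrier J1 v /\ in_carrier J2 v.

(* x and y lie in the same sector of J: connected in X minus the
   interiors of the edges of J *)
Definition same_sector (J : X * X -> Prop) : X -> X -> Prop :=
  clos_refl_sym_trans _ (fun x y => adj X x y /\ ~ J (x, y)).

Definition complete (C : X -> Prop) : Prop :=
  forall u v, C u -> C v -> u <> v -> adj X u v.

Definition clique (C : X -> Prop) : Prop :=
  complete C /\ forall v, (forall u, C u -> u <> v -> adj X u v) -> C v.

End GraphDefs.

Arguments walk {X}. Arguments dist {X}. Arguments square {X}. Arguments edge {X}.
Arguments hyp_step {X}. Arguments hyp_equiv {X}. Arguments is_hyperplane {X}.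
Arguments same_hyp {X}. Arguments transverse {X}. Arguments in_carrier {X}.
Arguments tangent {X}. Arguments same_sector {X}. Arguments complete {X}.
Arguments clique {X}.

Record Action (G : Group) (X : Graph) := {
  act :> G -> X -> X;
  act1 : forall x, act (gone G) x = x;
  actM : forall g h x, act (gmul G g h) x = act g (act h x);
  act_adj : forall g x y, adj X x y <-> adj X (act g x) (act g y)
}.

Section ActionDefs.
Variables (G : Group) (X : Graph) (A : Action G X).

Definition faithful : Prop := forall g, (forall x, A g x = x) -> g = gone G.

(* g J = { (g x, g y) | (x,y) in J } *)
Definition hyp_translate (g : G) (J : X * X -> Prop) : X * X -> Prop :=
  fun e => J (A (ginv G g) (fst e), A (ginv G g) (snd e)).

Definition stab_hyp (J : X * X -> Prop) (g : G) : Prop :=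
  same_hyp (hyp_translate g J) J.

Definition stab_set (C : X -> Prop) (g : G) : Prop :=
  forall v, C (A g v) <-> C v.

Definition hyperplane_special : Prop :=
  faithful /\
  (forall J g, is_hyperplane J -> ~ same_hyp (hyp_translate g J) J ->
     ~ transverse J (hyp_translate g J) /\ ~ tangent J (hyp_translate g J)) /\
  (forall J1 J2 g, is_hyperplane J1 -> is_hyperplane J2 -> transverse J1 J2 ->
     ~ tangent J1 (hyp_translate g J2)).

(* Elements of stab(J) act on the set of sectors of J by g.[x] = [g x].
   g and h induce the same element of the permutation group S(J) iff: *)
Definition same_on_sectors (J : X * X -> Prop) (g h : G) : Prop :=
  forall x, same_sector J (A g x) (A h x).

(* the action of S(J) on the sectors of J is free: an element of the image
   of stab(J) fixing one sector is the identity permutation *)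
Definition sectors_free (J : X * X -> Prop) : Prop :=
  forall g, stab_hyp J g -> (exists x, same_sector J (A g x) x) ->
    same_on_sectors J g (gone G).

Definition special : Prop :=
  hyperplane_special /\ forall J, is_hyperplane J -> sectors_free J.

Definition finitely_many_vertex_orbits : Prop :=
  exists l : list X, forall v : X, exists u g, In u l /\ v = A g u.

End ActionDefs.

(* Main.v *)
Require Import Defs.
From Stdlib Require Import Relations List Lia Arith Classical ClassicalEpsilon.
Set Implicit Arguments.
Unset Strict Implicit.


Lemma walk_app (X:Graph) (x y z : X) n : walk x y n -> adj X y z -> walk x z (S n).
Proof.
  intro H; revert z; induction H as [x|x y' w n Hxy W IH]; intros z Hz.
  - eapply walkS; [exact Hz| apply walk0].
  - eapply walkS; [exact Hxy| apply IH; exact Hz].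
Qed.

Lemma walk_rev (X:Graph) (x y : X) n : walk x y n -> walk y x n.
Proof.
  induction 1 as [x|x y' w n Hxy W IH]. constructor.
  eapply walk_app; [exact IH| apply adj_sym; exact Hxy].
Qed.

Lemma walk_trans (X:Graph) (x y z : X) n m : walk x y n -> walk y z m -> walk x z (n+m).
Proof.
  induction 1 as [x|x y' w n Hxy W IH]; intro H2; simpl; auto.
  eapply walkS; eauto.
Qed.

Lemma nat_min (P : nat -> Prop) : (exists n, P n) -> exists n, P n /\ forall m, P m -> n <= m.
Proof.
  intros [n Hn]. apply NNPP; intro Hno.
  assert (forall k, forall j, j <= k -> ~ P j).
  { induction k; intros j Hj Pj.
    - apply Hno. exists j. split; auto. intros; lia.
    - destruct (Nat.eq_dec j (S k)).
      + subst. apply Hno. exists (S k). split; auto. intros m Pm.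
        destruct (Nat.le_gt_cases (S k) m); auto. exfalso. apply (IHk m); auto; lia.
      + apply (IHk j); auto; lia. }
  apply (H n n); auto.
Qed.

Definition d (X : Graph) (x y : X) : nat := epsilon (inhabits 0) (fun n => dist x y n).
Arguments d {X}.

Lemma d_spec (X:Graph) : connected X -> forall x y : X, dist x y (d x y).
Proof.
  intros Hc x y. unfold d. apply epsilon_spec.
  destruct (@nat_min (fun n => walk x y n) (Hc x y)) as [n [Hn Hm]].
  exists n. split; auto.
Qed.

Lemma d_walk (X:Graph) (Hc: connected X) (x y : X) m : walk x y m -> d x y <= m.
Proof. intro; apply (d_spec Hc x y); auto. Qed.
Lemma d_walk' (X:Graph) (Hc: connected X) (x y : X) : walk x y (d x y).
Proof. apply (d_spec Hc x y). Qed.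

Lemma d_refl (X:Graph) (Hc: connected X) (x : X) : d x x = 0.
Proof. pose proof (d_walk Hc (walk0 _ x)). lia. Qed.

Lemma d_eq0 (X:Graph) (Hc: connected X) (x y : X) : d x y = 0 -> x = y.
Proof. intro H. pose proof (d_walk' Hc x y). rewrite H in H0. inversion H0; auto. Qed.

Lemma d_sym (X:Graph) (Hc: connected X) (x y : X) : d x y = d y x.
Proof.
  pose proof (d_walk Hc (walk_rev (d_walk' Hc x y))).
  pose proof (d_walk Hc (walk_rev (d_walk' Hc y x))). lia.
Qed.

Lemma d_tri (X:Graph) (Hc: connected X) (x y z : X) : d x z <= d x y + d y z.
Proof. apply d_walk; auto. apply walk_trans with y; apply d_walk'; auto. Qed.

Lemma d_adj1 (X:Graph) (Hc: connected X) (x y : X) : adj X x y -> d x y = 1.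
Proof.
  intro H. assert (d x y <= 1) by (apply d_walk; auto; eapply walkS; [exact H|constructor]).
  destruct (d x y) eqn:E; [|lia]. apply d_eq0 in E; auto. subst. exfalso; eapply adj_irrefl; eauto.
Qed.

Lemma d_adjR (X:Graph) (Hc: connected X) (a y z : X) : adj X y z -> d a z <= S (d a y).
Proof. intro H. pose proof (d_tri Hc a y z). rewrite (d_adj1 Hc H) in H0. lia. Qed.

Lemma d_adjL (X:Graph) (Hc: connected X) (a y z : X) : adj X y z -> d z a <= S (d y a).
Proof. intro H. rewrite (d_sym Hc z a), (d_sym Hc y a). apply d_adjR; auto. Qed.

Lemma d_pred (X:Graph) (Hc: connected X) (a y : X) n : d a y = S n -> exists y', adj X y' y /\ d a y' = n.
Proof.
  intro H. pose proof (walk_rev (d_walk' Hc a y)). rewrite H in H0.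
  inversion H0 as [|y1 y0 a1 n1 H2 H5]; subst. exists y0. split. apply adj_sym; auto.
  pose proof (d_walk Hc (walk_rev H5)).
  assert (H3: adj X y0 y) by (apply adj_sym; auto).
  pose proof (d_adjR Hc a H3). lia.
Qed.

Lemma tri' (X:Graph) (QM : quasi_median X) (a x y : X) :
  adj X x y -> d a x = d a y -> exists z, adj X z x /\ adj X z y /\ d a z = d a x - 1.
Proof.
  intros H E. destruct QM as [Hc [_ [_ [T _]]]].
  destruct (T a x y (d a x) H (d_spec Hc a x)) as [z [H1 [H2 H3]]].
  rewrite E; apply d_spec; auto.
  exists z. destruct H3 as [W M]. pose proof (d_walk Hc W). pose proof (M _ (d_walk' Hc a z)). repeat split; auto; lia.
Qed.

Lemma quad' (X:Graph) (QM : quasi_median X) (a x y z : X) :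
  x <> y -> adj X z x -> adj X z y -> d a x = d a y -> d a z = S (d a x) ->
  exists w, adj X w x /\ adj X w y /\ d a w = d a x - 1.
Proof.
  intros N H1 H2 E1 E2. destruct QM as [Hc [_ [_ [_ Q]]]].
  destruct (Q a x y z (d a x) N H1 H2 (d_spec Hc a x)) as [w [A1 [A2 A3]]].
  rewrite E1; apply d_spec; auto. rewrite <- E2; apply d_spec; auto.
  exists w. destruct A3 as [W M]. pose proof (d_walk Hc W). pose proof (M _ (d_walk' Hc a w)). repeat split; auto; lia.
Qed.


Lemma adj_neq (X:Graph) (x y : X) : adj X x y -> x <> y.
Proof. intros H E; subst; eapply adj_irrefl; eauto. Qed.

Ltac neq := let E := fresh in intro E; subst;
  first [ exfalso; eapply adj_irrefl; eassumption | lia ].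

Ltac nadj Hc := let H := fresh in intro H;
  match goal with E : d ?a _ = _ |- _ =>
    pose proof (d_adjR Hc a H); pose proof (d_adjR Hc a (adj_sym _ _ _ H)); lia end.

Definition is_gate (X:Graph) (K : X -> Prop) (v g : X) :=
  K g /\ forall c, K c -> c <> g -> d c v = S (d g v).

Lemma clique_ne (X:Graph) (K : X -> Prop) (v : X) : clique K -> exists c, K c.
Proof.
  intros [Hc Hm]. apply NNPP; intro N. apply N. exists v. apply Hm. intros u Ku. exfalso; apply N; eauto.
Qed.

Lemma not_max (X:Graph) (K : X -> Prop) z : clique K -> ~ K z ->
  exists u, K u /\ u <> z /\ ~ adj X u z.
Proof.
  intros [Hc Hm] N. apply NNPP; intro N2. apply N, Hm. intros u Ku Nu.
  apply NNPP; intro N3. apply N2; eauto.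
Qed.

Lemma gate_ex (X:Graph) (QM : quasi_median X) (K : X -> Prop) (v : X) :
  clique K -> exists g, is_gate K v g.
Proof.
  intro CK. pose proof QM as [Hc [NK4 _]].
  destruct (@nat_min (fun n => exists c, K c /\ d c v = n)) as [m [[g [Kg Eg]] Hmin]].
  { destruct (clique_ne v CK) as [c Kc]. eauto. }
  exists g. split; auto. intros c Kc Ncg.
  assert (Agc : adj X g c) by (apply (proj1 CK); auto).
  pose proof (Hmin (d c v) (ex_intro _ c (conj Kc eq_refl))).
  pose proof (d_adjR Hc v Agc). rewrite (d_sym Hc v c), (d_sym Hc v g) in H0.
  destruct (Nat.eq_dec (d c v) m) as [E|E]; [|lia]. exfalso.
  rewrite (d_sym Hc c v) in E. rewrite (d_sym Hc g v) in Eg.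
  destruct m as [|m].
  - apply d_eq0 in E; apply d_eq0 in Eg; auto. subst. auto.
  - destruct (tri' (a:=v) QM Agc) as [z [Z1 [Z2 Z3]]]; try lia.
    assert (~ K z). { intro Kz. pose proof (Hmin _ (ex_intro _ z (conj Kz eq_refl))).
      rewrite (d_sym Hc z v) in H1. lia. }
    destruct (not_max CK H1) as [u [Ku [Nuz Auz]]].
    apply NK4. exists g, c, z, u.
    assert (u <> g) by (intro; subst; apply Auz; apply adj_sym; auto).
    assert (u <> c) by (intro; subst; apply Auz; apply adj_sym; auto).
    repeat split; try (apply (proj1 CK); auto; fail); auto; try (apply adj_sym; auto);
      try (apply adj_neq; apply adj_sym; auto; fail).
    all: intro; apply Auz; apply adj_sym; auto.
Qed.

Lemma gate_uniq (X:Graph) (K : X -> Prop) (v g1 g2 : X) :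
  is_gate K v g1 -> is_gate K v g2 -> g1 = g2.
Proof.
  intros [K1 H1] [K2 H2]. apply NNPP; intro N.
  pose proof (H1 g2 K2 (fun E => N (eq_sym E))). pose proof (H2 g1 K1 N). lia.
Qed.

Lemma gate_self (X:Graph) (Hc : connected X) (K : X -> Prop) (v : X) :
  clique K -> K v -> is_gate K v v.
Proof.
  intros CK Kv. split; auto. intros c Kc N. rewrite d_refl by auto.
  apply d_adj1; auto. apply (proj1 CK); auto.
Qed.

Lemma gate_mem (X:Graph) (Hc : connected X) (K : X -> Prop) (v g : X) :
  clique K -> K v -> is_gate K v g -> g = v.
Proof. intros CK Kv G. eapply gate_uniq; eauto. apply gate_self; auto. Qed.

Lemma sepD (X:Graph) (Hc : connected X) (K : X -> Prop) (u v p q : X) :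
  adj X u v -> is_gate K u p -> is_gate K v q -> p <> q ->
  d p u = d q v /\ d q u = S (d p u) /\ d p v = S (d q v).
Proof.
  intros A [Kp Gp] [Kq Gq] N.
  pose proof (Gp q Kq (fun E => N (eq_sym E))). pose proof (Gq p Kp N).
  pose proof (d_adjR Hc p A). pose proof (d_adjR Hc q (adj_sym _ _ _ A)). lia.
Qed.

Lemma fwd_core (X:Graph) (QM : quasi_median X) (p q : X) : adj X p q ->
  forall k (u v : X), adj X u v -> d p u = k -> d q v = k -> d q u = S k -> d p v = S k ->
  hyp_equiv (p, q) (u, v).
Proof.
  intro Apq. pose proof QM as [Hc _].
  induction k; intros u v Auv E1 E2 E3 E4.
  - apply d_eq0 in E1; apply d_eq0 in E2; auto. subst. apply rst_refl.
  - destruct (d_pred Hc E1) as [u' [A1 D1]].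
    assert (Dqu' : d q u' = S k).
    { pose proof (d_tri Hc q p u'). rewrite (d_sym Hc q p), (d_adj1 Hc Apq) in H.
      pose proof (d_adjR Hc q A1). lia. }
    assert (u' <> v) by neq.
    destruct (quad' (a:=q) QM H (adj_sym _ _ _ A1) Auv) as [w [W1 [W2 W3]]]; try lia.
    assert (Dpw : d p w = S k).
    { pose proof (d_adjR Hc p W2). pose proof (d_adjR Hc p (adj_sym _ _ _ W1)). lia. }
    assert (Dqw : d q w = k) by lia.
    assert (Sq : square u v w u').
    { unfold square. repeat split; auto; try neq; try (apply adj_sym; auto);
      try (nadj Hc). }
    eapply rst_trans; [apply (IHk u' w (adj_sym _ _ _ W1)); auto|].
    apply rst_sym, rst_step. apply hs_sq. auto.
Qed.


Ltac neq2 := let E := fresh in intro E; subst;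
  first [ exfalso; eapply adj_irrefl; eassumption | congruence | lia ].

Ltac sg Hc := first [ assumption | apply adj_sym; assumption | neq2 | nadj Hc | let H := fresh in intro H; apply adj_sym in H; auto; fail ].

Lemma tri_lemma (X:Graph) (QM : quasi_median X) (K : X -> Prop) (a b c pa pb pc : X) :
  adj X a b -> adj X b c -> adj X a c -> is_gate K a pa -> is_gate K b pb -> is_gate K c pc ->
  pa <> pb -> pa <> pc.
Proof.
  intros Aab Abc Aac Ga Gb Gc N E. subst pc. pose proof QM as [Hc [NK4 _]].
  destruct (sepD Hc (adj_sym _ _ _ Abc) Gc Gb N) as [S1 [S2 S3]].
  destruct (sepD Hc Aab Ga Gb N) as [T1 [T2 T3]].
  destruct (tri' (a:=pa) QM Aac) as [z [Z1 [Z2 Z3]]]; try lia.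
  destruct (d pa a) eqn:Ea.
  - apply d_eq0 in Ea; auto. assert (d pa c = 0) by lia. apply d_eq0 in H; auto. subst.
    eapply adj_irrefl; eauto.
  - apply NK4. exists a, c, z, b. repeat split; sg Hc.
Qed.

Lemma nc_lemma (X:Graph) (QM : quasi_median X) (x y y' r p : X) k :
  adj X x y -> adj X x y' -> y <> y' -> ~ adj X y y' -> adj X p r ->
  d r y = k -> d r y' = k -> d r x = S k -> d p x = k -> d p y = S k -> d p y' = S k -> False.
Proof.
  intros A1 A2 N NA Apr E1 E2 E3 E4 E5 E6. pose proof QM as [Hc [NK4 [NK32 _]]].
  destruct k as [|k].
  - apply d_eq0 in E1; apply d_eq0 in E2; auto. congruence.
  - destruct (quad' (a:=r) QM N A1 A2) as [w [W1 [W2 W3]]]; try lia.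
    assert (Dpw : d p w = S k).
    { pose proof (d_tri Hc p r w). rewrite (d_adj1 Hc Apr) in H.
      pose proof (d_adjR Hc p W2). lia. }
    assert (x <> w) by neq2.
    assert (~ adj X x w) by nadj Hc.
    destruct (quad' (a:=p) QM H (adj_sym _ _ _ A1) (adj_sym _ _ _ W1)) as [w' [V1 [V2 V3]]]; try lia.
    apply NK32. exists w', y, y', x, w. repeat split; sg Hc.
Qed.

Lemma sq_core (X:Graph) (QM : quasi_median X) (K : X -> Prop) (x1 x2 x3 x4 p q r : X) :
  clique K -> square x1 x2 x3 x4 -> is_gate K x1 p -> is_gate K x2 q -> is_gate K x3 r -> is_gate K x4 r ->
  p <> q -> r <> p -> False.
Proof.
  intros CK Sq G1 G2 G3 G4 Npq Nrp. pose proof QM as [Hc [NK4 [NK32 _]]].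
  destruct Sq as [n12 [n13 [n14 [n23 [n24 [n34 [a12 [a23 [a34 [a41 [na13 na24]]]]]]]]]]].
  destruct (sepD Hc a12 G1 G2 Npq) as [S1 [S2 S3]].
  destruct (sepD Hc a41 G4 G1 Nrp) as [T1 [T2 T3]].
  remember (d p x1) as k eqn:Ek.
  destruct (classic (r = q)) as [Erq|Nrq].
  - subst r.
    destruct k as [|k].
    + assert (d q x2 = 0) by lia. assert (d q x4 = 0) by lia.
      apply d_eq0 in H; apply d_eq0 in H0; auto. congruence.
    + destruct (quad' (a:=q) QM n24 a12 (adj_sym _ _ _ a41)) as [w [W1 [W2 W3]]]; try lia.
      destruct (classic (w = x3)) as [Ew|Nw].
      * subst w. destruct G3 as [Kq G3]. destruct G1 as [Kp G1'].
        pose proof (G3 p Kp (fun E => Npq E)).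
        destruct (quad' (a:=p) QM n13 (adj_sym _ _ _ a12) a23) as [w' [V1 [V2 V3]]]; try lia.
        apply NK32. exists w', x2, x4, x1, x3. repeat split; sg Hc.
      * destruct (classic (adj X w x3)) as [Aw|NAw].
        -- apply NK4. exists w, x3, x2, x4. repeat split; sg Hc.
        -- apply NK32. exists w, x1, x3, x2, x4. repeat split; sg Hc.
  - assert (Dr2 : d r x2 = S (d q x2)) by (apply (proj2 G2); auto; apply (proj1 G3)).
    destruct (tri' (a:=r) QM a12) as [y [Y1 [Y2 Y3]]]; try lia.
    assert (y <> x4) by (intro; subst; apply na24; apply adj_sym; auto).
    assert (~ adj X y x4).
    { intro A. apply NK4. exists x1, y, x2, x4. repeat split; sg Hc. }
    destruct (gate_ex QM y CK) as [gy Gy].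
    assert (Dpy : d p y = S k).
    { pose proof (d_adjR Hc p Y2). pose proof (d_adjR Hc p (adj_sym _ _ _ Y1)).
      destruct (Nat.eq_dec (d p y) k) as [E|E]; [|lia]. exfalso.
      destruct Gy as [Kgy Gy].
      destruct (classic (gy = p)) as [->|Ngp].
      - pose proof (Gy r (proj1 G3) Nrp). lia.
      - destruct (classic (gy = r)) as [->|Ngr].
        + pose proof (Gy p (proj1 G1) (fun E => Nrp (eq_sym E))). lia.
        + pose proof (Gy p (proj1 G1) (fun E => Ngp (eq_sym E))).
          pose proof ((proj2 G1) gy Kgy Ngp).
          pose proof (d_adjR Hc gy Y1). lia. }
    apply (nc_lemma (x:=x1) (y:=y) (y':=x4) (r:=r) (p:=p) (k:=k) QM); auto; try lia.
    all: try (apply adj_sym; assumption).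
    all: try (apply (proj1 CK); [apply (proj1 G1)|apply (proj1 G3)|auto]).
Qed.

Lemma square_flip (X:Graph) (x1 x2 x3 x4 : X) : square x1 x2 x3 x4 -> square x2 x1 x4 x3.
Proof.
  intros [n12 [n13 [n14 [n23 [n24 [n34 [a12 [a23 [a34 [a41 [na13 na24]]]]]]]]]]].
  repeat split; try (apply adj_sym; assumption); try assumption; try (intro; subst; auto; fail);
  intro H; apply adj_sym in H; auto.
Qed.

Lemma square_rev (X:Graph) (x1 x2 x3 x4 : X) : square x1 x2 x3 x4 -> square x4 x3 x2 x1.
Proof.
  intros [n12 [n13 [n14 [n23 [n24 [n34 [a12 [a23 [a34 [a41 [na13 na24]]]]]]]]]]].
  repeat split; try (apply adj_sym; assumption); try assumption; try (intro; subst; auto; fail);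
  intro H; apply adj_sym in H; auto.
Qed.

Lemma sq_lemma (X:Graph) (QM : quasi_median X) (K : X -> Prop) (x1 x2 x3 x4 p q r : X) :
  clique K -> square x1 x2 x3 x4 -> is_gate K x1 p -> is_gate K x2 q -> is_gate K x3 r -> is_gate K x4 r ->
  p <> q -> False.
Proof.
  intros CK Sq G1 G2 G3 G4 Npq.
  destruct (classic (r = p)) as [->|Nrp].
  - apply (sq_core (x1:=x2) (x2:=x1) (x3:=x4) (x4:=x3) (p:=q) (q:=p) (r:=p) QM CK); auto.
    apply square_flip; auto.
  - eapply sq_core; eauto.
Qed.

Definition Sep (X:Graph) (K : X -> Prop) (e : X * X) : Prop :=
  forall g1 g2, is_gate K (fst e) g1 -> is_gate K (snd e) g2 -> g1 <> g2.

Lemma step_pres (X:Graph) (QM : quasi_median X) (K : X -> Prop) (e e' : X * X) :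
  clique K -> hyp_step e e' -> (Sep K e <-> Sep K e').
Proof.
  intros CK St. destruct St as [x y A|a b c Aab Abc Aac|x1 x2 x3 x4 Sq]; unfold Sep; simpl.
  - split; intros H g1 g2 G1 G2 E; apply (H g2 g1); auto.
  - split; intros H g1 g2 G1 G2.
    + destruct (gate_ex QM b CK) as [gb Gb].
      eapply tri_lemma; [exact QM| | | | exact G1 | exact Gb | exact G2 |]; eauto.
    + destruct (gate_ex QM c CK) as [gc Gc].
      eapply tri_lemma; [exact QM| | | | exact G1 | exact Gc | exact G2 |]; eauto.
      apply adj_sym; auto.
  - split; intros H g1 g2 G1 G2 E; subst g2.
    + destruct (gate_ex QM x1 CK) as [p Gp]. destruct (gate_ex QM x2 CK) as [q Gq].
      eapply (sq_lemma QM CK Sq Gp Gq G2 G1). auto.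
    + destruct (gate_ex QM x4 CK) as [p Gp]. destruct (gate_ex QM x3 CK) as [q Gq].
      eapply (sq_lemma QM CK (square_rev Sq) Gp Gq G2 G1). auto.
Qed.

Lemma equiv_pres (X:Graph) (QM : quasi_median X) (K : X -> Prop) (e e' : X * X) :
  clique K -> hyp_equiv e e' -> (Sep K e <-> Sep K e').
Proof.
  intros CK H. induction H.
  - apply step_pres; auto.
  - tauto.
  - tauto.
  - tauto.
Qed.


Lemma has_nbr (X:Graph) (Hc : connected X) (x0 y0 : X) : adj X x0 y0 -> forall c : X, exists w, adj X c w.
Proof.
  intros A c. destruct (Hc c x0) as [n W]. inversion W; subst; eauto.
Qed.

Lemma clique_two (X:Graph) (Hc : connected X) (x0 y0 : X) (K : X -> Prop) :
  adj X x0 y0 -> clique K -> forall c, K c -> exists c', K c' /\ c' <> c.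
Proof.
  intros A CK c Kc. destruct (has_nbr Hc A c) as [w Aw].
  apply NNPP; intro N. apply N. exists w. split.
  - apply (proj2 CK). intros u Ku Nu. destruct (classic (u = c)) as [->|Nuc]; auto.
    exfalso; apply N; eauto.
  - intro; subst; eapply adj_irrefl; eauto.
Qed.

Definition KinJ (X:Graph) (K : X -> Prop) (J : X * X -> Prop) :=
  forall x y, K x -> K y -> adj X x y -> J (x, y).

Lemma fwdH (X:Graph) (QM : quasi_median X) (K : X -> Prop) (J : X * X -> Prop) (u v p q : X) :
  is_hyperplane J -> clique K -> KinJ K J ->
  adj X u v -> is_gate K u p -> is_gate K v q -> p <> q -> J (u, v).
Proof.
  intros [x0 [y0 [A0 HJ]]] CK KJ Auv Gu Gv N. pose proof QM as [Hc _].
  destruct (sepD Hc Auv Gu Gv N) as [S1 [S2 S3]].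
  assert (Apq : adj X p q) by (apply (proj1 CK); auto; [apply (proj1 Gu)|apply (proj1 Gv)]).
  pose proof (fwd_core QM Apq (k:=d p u) Auv eq_refl (eq_sym S1) S2 ltac:(lia)).
  apply HJ. split. exact Auv.
  assert (J (p, q)) by (apply KJ; auto; [apply (proj1 Gu)|apply (proj1 Gv)]).
  apply HJ in H0. destruct H0. eapply rst_trans; eauto.
Qed.

Lemma sector_gate (X:Graph) (QM : quasi_median X) (K : X -> Prop) (J : X * X -> Prop) (a b : X) :
  is_hyperplane J -> clique K -> KinJ K J -> same_sector J a b ->
  forall ga gb, is_gate K a ga -> is_gate K b gb -> ga = gb.
Proof.
  intros HJ CK KJ SS. induction SS as [x y [A NJ]|x|x y S IH|x y z S1 IH1 S2 IH2]; intros ga gb Ga Gb.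
  - apply NNPP; intro N. apply NJ. eapply fwdH; eauto.
  - eapply gate_uniq; eauto.
  - symmetry; auto.
  - destruct (gate_ex QM y CK) as [gy Gy]. transitivity gy; auto.
Qed.

Lemma convH (X:Graph) (QM : quasi_median X) (K : X -> Prop) (J : X * X -> Prop) (u v : X) :
  is_hyperplane J -> clique K -> KinJ K J -> J (u, v) -> Sep K (u, v).
Proof.
  intros HJ CK KJ Juv. pose proof QM as [Hc _]. pose proof HJ as [x0 [y0 [A0 HJ']]].
  destruct (clique_ne x0 CK) as [c1 K1]. destruct (clique_two Hc A0 CK K1) as [c2 [K2 N]].
  assert (A12 : adj X c2 c1) by (apply (proj1 CK); auto).
  assert (J (c2, c1)) by (apply KJ; auto).
  apply HJ' in H. apply HJ' in Juv. destruct H as [_ H]. destruct Juv as [_ H'].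
  assert (E : hyp_equiv (c2, c1) (u, v)) by (eapply rst_trans; [apply rst_sym; exact H| exact H']).
  apply (equiv_pres QM CK E). unfold Sep; simpl. intros g1 g2 G1 G2.
  rewrite (gate_mem Hc CK K2 G1), (gate_mem Hc CK K1 G2). auto.
Qed.

Lemma gate_sector (X:Graph) (QM : quasi_median X) (K : X -> Prop) (J : X * X -> Prop) :
  is_hyperplane J -> clique K -> KinJ K J ->
  forall n (v g : X), d g v = n -> is_gate K v g -> same_sector J v g.
Proof.
  intros HJ CK KJ. pose proof QM as [Hc _].
  induction n; intros v g E G.
  - apply d_eq0 in E; auto. subst. apply rst_refl.
  - destruct (d_pred Hc E) as [v' [A D]].
    assert (G' : is_gate K v' g).
    { destruct (gate_ex QM v' CK) as [s Gs].
      destruct (classic (s = g)) as [->|Nsg]; auto. exfalso.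
      pose proof ((proj2 Gs) g (proj1 G) (fun E => Nsg (eq_sym E))).
      pose proof ((proj2 G) s (proj1 Gs) Nsg).
      pose proof (d_adjR Hc s A). lia. }
    eapply rst_trans; [|apply (IHn v' g D G')].
    apply rst_step. split. apply adj_sym; auto.
    intro Jv. apply (convH QM HJ CK KJ Jv G G'). auto.
Qed.

Lemma F_lemma (X:Graph) (QM : quasi_median X) (K K' : X -> Prop) (J : X * X -> Prop) (b : X) :
  is_hyperplane J -> clique K -> clique K' -> KinJ K J -> KinJ K' J -> K b -> K' b ->
  forall v, K' v -> K v.
Proof.
  intros HJ CK CK' KJ KJ' Kb Kb' v Kv. pose proof QM as [Hc _].
  destruct (classic (v = b)) as [->|Nvb]; auto.
  assert (A : adj X b v) by (apply (proj1 CK'); auto).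
  apply NNPP; intro NK.
  destruct (gate_ex QM v CK) as [g Gv].
  assert (g = b).
  { apply NNPP; intro Ngb. pose proof ((proj2 Gv) b Kb (fun E => Ngb (eq_sym E))).
    rewrite (d_adj1 Hc A) in H. assert (d g v = 0) by lia. apply d_eq0 in H0; auto. subst.
    apply NK, (proj1 Gv). }
  subst g.
  apply (convH QM HJ CK KJ (KJ' b v Kb' Kv A) (gate_self Hc CK Kb) Gv). auto.
Qed.



Lemma act_inv_l (G:Group) (X:Graph) (A : Action G X) g x : A (ginv G g) (A g x) = x.
Proof. rewrite <- actM, gmulVg, act1. auto. Qed.
Lemma act_inv_r (G:Group) (X:Graph) (A : Action G X) g x : A g (A (ginv G g) x) = x.
Proof. rewrite <- actM, gmulgV, act1. auto. Qed.
Lemma act_inj (G:Group) (X:Graph) (A : Action G X) g x y : A g x = A g y -> x = y.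
Proof. intro E. rewrite <- (act_inv_l A g x), E, act_inv_l. auto. Qed.

Definition Pst (G:Group) (X:Graph) (A : Action G X) (J : X * X -> Prop) (g : G) :=
  forall x y, J (A g x, A g y) <-> J (x, y).

Lemma stab_iff (G:Group) (X:Graph) (A : Action G X) J g : stab_hyp A J g <-> Pst A J g.
Proof.
  unfold stab_hyp, Pst, same_hyp, hyp_translate. split.
  - intros H x y. rewrite <- (H (A g x, A g y)). simpl. rewrite !act_inv_l. tauto.
  - intros H [x y]. simpl. rewrite <- (H (A (ginv G g) x) (A (ginv G g) y)), !act_inv_r. tauto.
Qed.

Lemma Pst_inv (G:Group) (X:Graph) (A : Action G X) J g : Pst A J g -> Pst A J (ginv G g).
Proof. unfold Pst in *. intros H x y. rewrite <- (H (A (ginv G g) x) (A (ginv G g) y)), !act_inv_r. tauto. Qed.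

Lemma Pst_mul (G:Group) (X:Graph) (A : Action G X) J g h : Pst A J g -> Pst A J h -> Pst A J (gmul G g h).
Proof. unfold Pst in *. intros H1 H2 x y. rewrite !actM, H1, H2. tauto. Qed.

Lemma sector_pres (G:Group) (X:Graph) (A : Action G X) J g a b :
  Pst A J g -> same_sector J a b -> same_sector J (A g a) (A g b).
Proof.
  unfold Pst in *. intros P S. induction S as [x y [Ad NJ]|x|x y S IH|x y z S1 IH1 S2 IH2].
  - apply rst_step. split. apply act_adj; auto. rewrite P; auto.
  - apply rst_refl.
  - apply rst_sym; auto.
  - eapply rst_trans; eauto.
Qed.

Lemma stabC_inv (G:Group) (X:Graph) (A : Action G X) (C : X -> Prop) g :
  stab_set A C g -> stab_set A C (ginv G g).
Proof. intros H v. rewrite <- (H (A (ginv G g) v)), act_inv_r. tauto. Qed.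

Lemma clique_tr (G:Group) (X:Graph) (A : Action G X) (C : X -> Prop) m :
  clique C -> clique (fun v => C (A m v)).
Proof.
  intros [CC CM]. split.
  - intros a b Ca Cb N. apply (act_adj A m). apply CC; auto.
    intro E; apply N; eapply act_inj; eauto.
  - intros v H. apply CM. intros w Cw Nw.
    assert (Ad : adj X (A (ginv G m) w) v).
    { apply H. rewrite act_inv_r; auto. intro E. apply Nw. rewrite <- E, act_inv_r. auto. }
    apply (act_adj A m) in Ad. rewrite act_inv_r in Ad. auto.
Qed.

Lemma KinJ_tr (G:Group) (X:Graph) (A : Action G X) (C : X -> Prop) J m :
  KinJ C J -> Pst A J m -> KinJ (fun v => C (A m v)) J.
Proof.
  intros KJ P a b Ca Cb Ad. apply P. apply KJ; auto. apply act_adj; auto.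
Qed.


Definition Tc (X:Graph) (x y : X) : X -> Prop := fun v => v = x \/ v = y \/ (adj X x v /\ adj X y v).

Lemma T_adjx (X:Graph) (x y z : X) : adj X x y -> Tc x y z -> z <> x -> adj X x z.
Proof. intros A [E|[E|[A1 A2]]] N; subst; auto. congruence. Qed.

Lemma T_clique (X:Graph) (QM : quasi_median X) (x y : X) : adj X x y -> clique (Tc x y).
Proof.
  intros A. pose proof QM as [Hc [NK4 _]]. split.
  - intros a b Ta Tb N.
    destruct Ta as [->|[->|[Ax Ay]]]; destruct Tb as [->|[->|[Bx By]]]; try congruence;
      try (apply adj_sym; assumption); try assumption.
    apply NNPP; intro NA. apply NK4. exists x, y, a, b.
    repeat split; try assumption; try (apply adj_neq; assumption);
    try (intro; subst; apply (adj_irrefl _ _ Ay); fail); try (intro; subst; apply (adj_irrefl _ _ By); fail).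
  - intros v H. destruct (classic (v = x)) as [->|Nx]; [left; auto|].
    destruct (classic (v = y)) as [->|Ny]; [right; left; auto|].
    right; right. split; apply H; unfold Tc; auto.
Qed.

Lemma T_inH (X:Graph) (x y : X) : adj X x y -> KinJ (Tc x y) (fun e => edge e /\ hyp_equiv (x, y) e).
Proof.
  intros A.
  assert (HX : forall z, Tc x y z -> z <> x -> hyp_equiv (x, y) (x, z)).
  { intros z [E|[E|[A1 A2]]] N; subst. congruence. apply rst_refl.
    apply rst_step. apply hs_tri; auto. }
  intros a b Ta Tb Ad. split. exact Ad.
  destruct (classic (a = x)) as [->|Na]. { apply HX; [exact Tb| intro E; subst b; exact (adj_irrefl _ _ Ad)]. }
  destruct (classic (b = x)) as [->|Nb].
  - eapply rst_trans. apply (HX a Ta Na). apply rst_step. apply hs_rev. apply (T_adjx (y:=y)); auto.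
  - eapply rst_trans. apply (HX a Ta Na). eapply rst_trans. apply rst_step. apply hs_rev. apply (T_adjx (y:=y)); auto.
    apply rst_step. apply hs_tri; auto. apply adj_sym, (T_adjx (y:=y)); auto. apply (T_adjx (y:=y)); auto.
Qed.

Lemma step_fix (G:Group) (X:Graph) (A : Action G X) (QM : quasi_median X) (k : G) (x y : X) :
  special A -> A k x = x -> adj X x y -> A k y = y.
Proof.
  intros [[Ff [H1 H2]] SF] Fx Axy. pose proof QM as [Hc _].
  set (H := fun e : X * X => edge e /\ hyp_equiv (x, y) e).
  assert (HH : is_hyperplane H) by (exists x, y; split; [exact Axy| intro e; unfold H; tauto]).
  assert (Axy' : adj X x (A k y)) by (rewrite <- Fx at 1; apply act_adj; auto).
  assert (Fx' : A (ginv G k) x = x) by (rewrite <- Fx at 1; apply act_inv_l).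
  assert (St : stab_hyp A H k).
  { apply NNPP; intro N. destruct (H1 H k HH N) as [_ NT]. apply NT.
    split; [exact (fun S => N (fun e => iff_sym (S e)))|]. split; [exact (fun T => proj1 (H1 H k HH N) T)|].
    exists x. split.
    - exists y. left. split. exact Axy. apply rst_refl.
    - exists (A k y). left. unfold hyp_translate; simpl. rewrite Fx', act_inv_l.
      split. exact Axy. apply rst_refl. }
  assert (Ex : exists z, same_sector H (A k z) z) by (exists x; rewrite Fx; apply rst_refl).
  pose proof (SF H HH k St Ex y) as Sy.
  rewrite act1 in Sy.
  apply NNPP; intro N.
  destruct (gate_ex QM (A k y) (T_clique QM Axy)) as [g Gg].
  pose proof (sector_gate QM HH (T_clique QM Axy) (T_inH Axy) Sy Gg
     (gate_self Hc (T_clique QM Axy) (or_intror (or_introl eq_refl)))). subst g.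
  assert (Tx : Tc x y x) by (left; auto).
  pose proof ((proj2 Gg) x Tx (adj_neq Axy)).
  rewrite (d_adj1 Hc Axy') in H0. assert (d y (A k y) = 0) by lia.
  apply d_eq0 in H3; auto.
Qed.


Lemma tangent_of (G:Group) (X:Graph) (A : Action G X) (J : X * X -> Prop) (g : G) (v w w' : X) :
  hyperplane_special A -> is_hyperplane J ->
  J (v, w) -> J (A (ginv G g) v, A (ginv G g) w') -> stab_hyp A J g.
Proof.
  intros [_ [H1 _]] HJ Jw Jw'. apply NNPP; intro N.
  destruct (H1 J g HJ N) as [NT NTa]. apply NTa.
  split; [exact (fun S => N (fun e => iff_sym (S e)))|]. split; [exact NT|].
  exists v. split. exists w; left; auto. exists w'; left. exact Jw'.
Qed.

Lemma part1 (G:Group) (X:Graph) (A : Action G X) (QM : quasi_median X) (J : X * X -> Prop) (C : X -> Prop) :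
  hyperplane_special A -> is_hyperplane J -> clique C -> KinJ C J ->
  forall g, stab_set A C g -> stab_hyp A J g.
Proof.
  intros HS HJ CL CJ g Sg. pose proof QM as [Hc _]. pose proof HJ as [x0 [y0 [A0 _]]].
  destruct (clique_ne x0 CL) as [c1 K1]. destruct (clique_two Hc A0 CL K1) as [c2 [K2 N]].
  assert (A12 : adj X c1 c2) by (apply (proj1 CL); auto).
  apply (tangent_of (v:=c1) (w:=c2) (w':=c2) HS HJ); auto.
  apply CJ.
  - rewrite <- (Sg (A (ginv G g) c1)), act_inv_r; auto.
  - rewrite <- (Sg (A (ginv G g) c2)), act_inv_r; auto.
  - apply act_adj; auto.
Qed.

Lemma walk_fix (G:Group) (X:Graph) (A : Action G X) (QM : quasi_median X) (k : G) :
  special A -> forall (a b : X) n, walk a b n -> A k a = a -> A k b = b.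
Proof.
  intros SP a b n W. induction W as [x|x y z n Axy W IH]; auto.
  intro F. apply IH. eapply step_fix; eauto.
Qed.

Lemma part2 (G:Group) (X:Graph) (A : Action G X) (QM : quasi_median X) (J : X * X -> Prop) (C : X -> Prop) :
  special A -> is_hyperplane J -> clique C -> KinJ C J ->
  forall g h, stab_set A C g -> stab_set A C h -> same_on_sectors A J g h -> g = h.
Proof.
  intros SP HJ CL CJ g h Sg Sh SS. pose proof QM as [Hc _]. pose proof HJ as [x0 [y0 [A0 _]]].
  pose proof SP as [[Ff [H1 H2]] SF].
  assert (Pg : Pst A J g) by (apply stab_iff, (part1 QM (proj1 SP) HJ CL CJ); auto).
  assert (Ph : Pst A J h) by (apply stab_iff, (part1 QM (proj1 SP) HJ CL CJ); auto).
  set (k := gmul G (ginv G h) g).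
  assert (Tk : forall x, same_sector J (A k x) x).
  { intro x. unfold k. rewrite actM. rewrite <- (act_inv_l A h x) at 2.
    apply sector_pres. apply Pst_inv; auto. apply SS. }
  destruct (clique_ne x0 CL) as [c Kc].
  assert (Kkc : C (A k c)).
  { unfold k. rewrite actM. apply (stabC_inv Sh). apply Sg. auto. }
  assert (Fc : A k c = c).
  { eapply (sector_gate QM HJ CL CJ (Tk c)); apply gate_self; auto. }
  assert (Fall : forall v, A k v = v).
  { intro v. destruct (Hc c v) as [n W]. eapply walk_fix; eauto. }
  pose proof (Ff k Fall) as E. unfold k in E.
  rewrite <- (gmul1g G g), <- (gmulgV G h), <- gmulA, E, gmulg1. auto.
Qed.

Lemma list_choice (T U : Type) (P : U -> Prop) (R : T -> U -> Prop) (l0 : list T) :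
  exists l : list U, (forall h, In h l -> P h) /\
    forall u, In u l0 -> (exists m, P m /\ R u m) -> exists h, In h l /\ P h /\ R u h.
Proof.
  induction l0 as [|u l0 [l [L1 L2]]].
  - exists nil. split; intros; simpl in *; tauto.
  - destruct (classic (exists m, P m /\ R u m)) as [[m [Pm Rm]]|N].
    + exists (m :: l). split.
      * intros h [->|I]; auto.
      * intros u' [->|I] Ex. exists m; simpl; auto.
        destruct (L2 u' I Ex) as [h [Ih Hh]]. exists h; simpl; auto.
    + exists l. split; auto. intros u' [->|I] Ex. contradiction.
      apply L2; auto.
Qed.

Lemma trans_stab (G:Group) (X:Graph) (A : Action G X) (QM : quasi_median X) (J : X * X -> Prop) (C : X -> Prop) :
  hyperplane_special A -> is_hyperplane J -> clique C -> KinJ C J ->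
  forall n y y', C y -> C y' -> A n y' = y -> stab_hyp A J n /\ stab_set A C n.
Proof.
  intros HS HJ CL CJ n y y' Ky Ky' E. pose proof QM as [Hc _]. pose proof HJ as [x0 [y0 [A0 _]]].
  destruct (clique_two Hc A0 CL Ky) as [c [Kc Nc]].
  destruct (clique_two Hc A0 CL Ky') as [c' [Kc' Nc']].
  assert (St : stab_hyp A J n).
  { apply (tangent_of (v:=y) (w:=c) (w':=A n c') HS HJ).
    - apply CJ; auto. apply (proj1 CL); auto.
    - rewrite <- E, !act_inv_l. apply CJ; auto. apply (proj1 CL); auto. }
  split; auto.
  set (K' := fun v => C (A (ginv G n) v)).
  assert (CK' : clique K') by (apply clique_tr; auto).
  assert (PJ : Pst A J (ginv G n)) by (apply Pst_inv, stab_iff; auto).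
  assert (KJ' : KinJ K' J) by (apply KinJ_tr; auto).
  assert (Ky2 : K' y) by (unfold K'; rewrite <- E, act_inv_l; auto).
  intro v. split; intro H.
  - pose proof (F_lemma QM HJ CK' CL KJ' CJ Ky2 Ky H) as H'. unfold K' in H'.
    rewrite act_inv_l in H'. auto.
  - apply (F_lemma QM HJ CL CK' CJ KJ' Ky Ky2). unfold K'. rewrite act_inv_l. auto.
Qed.

Lemma part3 (G:Group) (X:Graph) (A : Action G X) (QM : quasi_median X) (J : X * X -> Prop) (C : X -> Prop) :
  special A -> finitely_many_vertex_orbits A -> is_hyperplane J -> clique C -> KinJ C J ->
  exists l : list (gcar G),
     (forall h, In h l -> stab_hyp A J h) /\
     forall g, stab_hyp A J g ->
       exists h c, In h l /\ stab_set A C c /\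
         same_on_sectors A J g (gmul G h c).
Proof.
  intros SP [l0 Hl0] HJ CL CJ. pose proof QM as [Hc _]. pose proof HJ as [x0' _].
  pose proof SP as [HS SF].
  destruct (clique_ne x0' CL) as [x0 Kx0].
  destruct (@list_choice X (gcar G) (stab_hyp A J)
     (fun u m => exists y k, is_gate C (A (ginv G m) x0) y /\ y = A k u) l0) as [l [L1 L2]].
  exists l. split; auto. intros g Sg.
  destruct (gate_ex QM (A (ginv G g) x0) CL) as [y Gy].
  destruct (Hl0 y) as [u [k [Iu Eu]]].
  destruct (L2 u Iu (ex_intro _ g (conj Sg (ex_intro _ y (ex_intro _ k (conj Gy Eu))))))
    as [h [Ih [Sh [y' [k' [Gy' Ey']]]]]].
  set (n := gmul G k (ginv G k')).
  assert (En : A n y' = y) by (unfold n; rewrite actM, Ey', act_inv_l; auto).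
  destruct (trans_stab QM HS HJ CL CJ (proj1 Gy) (proj1 Gy') En) as [Sn Cn].
  apply stab_iff in Sg. apply stab_iff in Sh. apply stab_iff in Sn.
  pose proof (gate_sector QM HJ CL CJ eq_refl Gy) as S1.
  pose proof (gate_sector QM HJ CL CJ eq_refl Gy') as S2.
  pose proof (sector_pres Sn S2) as S3. rewrite En in S3.
  pose proof (sector_pres Sg (rst_trans _ _ _ _ _ S3 (rst_sym _ _ _ _ S1))) as S5.
  rewrite act_inv_r in S5.
  set (f := gmul G (gmul G g n) (ginv G h)).
  assert (Pf : Pst A J f) by (apply Pst_mul; [apply Pst_mul; auto| apply Pst_inv; auto]).
  assert (Ex : exists z, same_sector J (A f z) z) by (exists x0; unfold f; rewrite !actM; exact S5).
  pose proof (SF J HJ f (proj2 (stab_iff A J f) Pf) Ex) as SFf.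
  exists h, (ginv G n). split; auto. split. apply stabC_inv; auto.
  intro x. specialize (SFf (A h (A (ginv G n) x))). rewrite act1 in SFf. unfold f in SFf.
  rewrite !actM, act_inv_l, act_inv_r in SFf. rewrite actM. exact SFf.
Qed.

Unset Implicit Arguments.
Set Strict Implicit.

Theorem proposition3p3 (G : Group) (X : Graph) (A : Action G X)
  (J : X * X -> Prop) (C : X -> Prop) :
  quasi_median X ->
  special A ->
  finitely_many_vertex_orbits A ->
  is_hyperplane J ->
  clique C ->
  (forall x y, C x -> C y -> adj X x y -> J (x, y)) ->
  (* stab_G(C) <= stab_G(J) *)
  (forall g, stab_set A C g -> stab_hyp A J g) /\
  (* the natural morphism stab_G(C) -> S(J) is injective *)
  (forall g h, stab_set A C g -> stab_set A C h ->
     same_on_sectors A J g h -> g = h) /\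
  (* its image has finite index in S(J): finitely many cosets h.Im cover S(J) *)
  (exists l : list (gcar G),
     (forall h, In h l -> stab_hyp A J h) /\
     forall g, stab_hyp A J g ->
       exists h c, In h l /\ stab_set A C c /\
         same_on_sectors A J g (gmul G h c)).
Proof.
  intros QM SP FO HJ CL CJ. split; [|split].
  - apply (part1 QM (proj1 SP) HJ CL CJ).
  - apply (part2 QM SP HJ CL CJ).
  - apply (part3 QM SP FO HJ CL CJ).
Qed.
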